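(* For every odd integer $n\ge 3$ and every positive divisor $\lambda$ of $2n$, there exists a ${}^\lambda\mathrm{H}_{2n/\lambda}(n;3)$.
   Context: For positive integers $m,n,s,k,\lambda,t$ with $t$ dividing $\frac{2nk}{\lambda}$, let $v=\frac{2nk}{\lambda}+t$ and $J$ the subgroup of $\mathbb{Z}_v$ of order $t$. A ${}^\lambda\mathrm{H}_t(m,n;s,k)$ is an $m\times n$ partially filled array with entries in $\mathbb{Z}_v$ such that: (a) each row has exactly $s$ and each column exactly $k$ filled cells; (b) the multiset $\{\pm x: x$ an entry of a filled cell$\}$ contains each element of $\mathbb{Z}_v\setminus J$ exactly $\lambda$ times and no element of $J$; (c) every row and every column sums to $0$ in $\mathbb{Z}_v$. When $m=n$ (so $s=k$) it is denoted ${}^\lambda\mathrm{H}_t(n;k)$. *)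

(* Defs.v *)
From mathcomp Require Import all_boot all_order all_algebra.
Set Implicit Arguments. Unset Strict Implicit. Unset Printing Implicit Defensive.
Import GRing.Theory.
Local Open Scope ring_scope.

(* Heffter array  ^lam H_t(m,n;s,k).
   v = 2nk/lam + t ; entries in Z_v (here v >= 2 always).
   Cells: A i j = None (empty) or Some x (filled with x). *)

Definition subJ (v t : nat) : {set 'Z_v} :=
  [set x : 'Z_v | ((v %/ t)%N %| (x : nat))%N].

Definition is_heffter (lam t m n s k v : nat)
    (A : 'I_m -> 'I_n -> option 'Z_v) : Prop :=
  (forall i : 'I_m, #|[set j : 'I_n | A i j != None]| = s) /\
  (forall j : 'I_n, #|[set i : 'I_m | A i j != None]| = k) /\
  (* (b) the multiset {+-x} covers Z_v \ J exactly lam times, J never *)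
  (forall y : 'Z_v,
     (#|[set p : 'I_m * 'I_n | A p.1 p.2 == Some y]|
      + #|[set p : 'I_m * 'I_n | A p.1 p.2 == Some (- y)]|)%N
     = (if y \in subJ v t then 0 else lam)%N) /\
  (forall i : 'I_m, \sum_(j < n) odflt 0 (A i j) = 0) /\
  (forall j : 'I_n, \sum_(i < m) odflt 0 (A i j) = 0).

Definition exists_heffter (lam t m n s k : nat) : Prop :=
  (0 < lam)%N /\ (0 < t)%N /\ (0 < m)%N /\ (0 < n)%N /\ (0 < s)%N /\
  (0 < k)%N /\ (lam %| 2 * n * k)%N /\ (t %| (2 * n * k) %/ lam)%N /\
  exists A : 'I_m -> 'I_n -> option 'Z_((2 * n * k) %/ lam + t),
    @is_heffter lam t m n s k _ A.

Definition exists_heffter_sq (lam t n k : nat) : Prop :=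
  exists_heffter lam t n n k k.

(* Main.v *)
Require Import Defs.
From mathcomp Require Import all_boot all_order all_algebra zify.
Set Implicit Arguments. Unset Strict Implicit. Unset Printing Implicit Defensive.
Import GRing.Theory.

Lemma mod2 n x : x < n + n -> x %% n = if x < n then x else x - n.
Proof.
move=> h2; case: (ltnP x n) => h1; first by rewrite modn_small.
rewrite -{1}(subnK h1) modnDr modn_small //; lia.
Qed.

Definition code (d : nat) (s : bool) : nat :=
  match d, s with
  | 0, false => 1 | 0, true => 7
  | 1, false => 5 | 1, true => 3
  | _, false => 2 | _, true => 6 end.

Definition kp (n i d : nat) (s : bool) : nat :=
  match d, s with
  | 0, false => i | 0, true => n - 1 - i
  | 1, false => 2 * (n - i) | 1, true => 2 * i + n - 1
  | _, false => i + n - 1 | _, true => n - i end.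

Definition raw n i d s := code d s + 8 * kp n i d s.

Definition subm n (a b : nat) := (a + n - b) %% n.

Lemma raw_pair n i d : i < n -> d < 3 -> 8 * n %| raw n i d false + raw n i d true.
Proof.
move=> hi; case: d => [|[|[|d]]] // _; apply/dvdnP; rewrite /raw /kp /code.
- by exists 1; lia.
- by exists 3; lia.
- by exists 2; lia.
Qed.

Lemma raw_row n i : i < n -> 8 * n %| raw n i 0 false + raw n i 1 false + raw n i 2 false.
Proof. move=> hi; apply/dvdnP; exists 3; rewrite /raw /kp /code; lia. Qed.

Lemma subm_rot n i d : i < n -> d < n -> subm n ((i + d) %% n) i = d.
Proof.
move=> hi hd; rewrite /subm (mod2 (x := i + d)); last lia.
case: ltnP => h1; rewrite mod2; try lia; case: ltnP => h2; lia.
Qed.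

Lemma subm_subm n j d : j < n -> d < n -> subm n j (subm n j d) = d.
Proof.
move=> hj hd; rewrite /subm (mod2 (x := j + n - d)); last lia.
case: ltnP => h1; rewrite mod2; try lia; case: ltnP => h2; lia.
Qed.

Lemma subm_lt n j d : 0 < n -> subm n j d < n.
Proof. by move=> h; rewrite /subm ltn_pmod. Qed.

Lemma raw_col n j : j < n -> 3 <= n ->
  8 * n %| raw n (subm n j 0) 0 false + raw n (subm n j 1) 1 false + raw n (subm n j 2) 2 false.
Proof.
move=> hj hn; rewrite /subm !(mod2 (n := n)); try lia.
have [->|j0] := eqVneq j 0.
  rewrite /=; case: ltnP; try lia; move=> _; case: ltnP; try lia; move=> _; case: ltnP; try lia; move=> _.
  by apply/dvdnP; exists 2; rewrite /raw /kp /code; lia.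
have [->|j1] := eqVneq j 1.
  case: ltnP; try lia; move=> _; case: ltnP; try lia; move=> _; case: ltnP; try lia; move=> _.
  by apply/dvdnP; exists 4; rewrite /raw /kp /code; lia.
case: ltnP; try lia; move=> _; case: ltnP; try lia; move=> _; case: ltnP; try lia; move=> _.
by apply/dvdnP; exists 3; rewrite /raw /kp /code; lia.
Qed.

Lemma code_lt d s : code d s < 8.
Proof. by case: d => [|[|?]]; case: s. Qed.

Lemma raw_mod8 n i d s : raw n i d s %% 8 = code d s.
Proof. have := code_lt d s; rewrite /raw; lia. Qed.

Lemma half_cancel n a b : odd n -> 2 * a = 2 * b %[mod n] -> a = b %[mod n].
Proof.
move=> hn h.
have hh : (n.+1)./2 * 2 = n.+1.
  by rewrite muln2 halfK /= hn subn0.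
have e : forall c, (n.+1)./2 * (2 * c) = c * n + c.
  by move=> c; rewrite mulnA hh mulSn mulnC addnC.
by rewrite -(modnMDl a a) -(modnMDl b b) -!e -modnMmr h modnMmr.
Qed.

Lemma addm n a b c A B : a = b %[mod n] -> a + c = A -> b + c = B -> A = B %[mod n].
Proof. by move=> h <- <-; rewrite -modnDml h modnDml. Qed.

Lemma kp_inj n i i' d s : odd n -> i < n -> i' < n -> d < 3 ->
  kp n i d s = kp n i' d s %[mod n] -> i = i'.
Proof.
move=> hn hi hi' hd h.
suff : i = i' %[mod n] by rewrite !modn_small.
move: h; case: d hd => [|[|[|d]]] // _; case: s => /= h.
- have e1 : n - 1 - i + (i + i') = n - 1 + i' by lia.
  have e2 : n - 1 - i' + (i + i') = n - 1 + i by lia.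
  have /eqP := addm h e1 e2.
  by rewrite eqn_modDl => /eqP.
- by [].
- apply: half_cancel => //.
  have e1 : 2 * i + n - 1 + 0 = 2 * i + (n - 1) by lia.
  have e2 : 2 * i' + n - 1 + 0 = 2 * i' + (n - 1) by lia.
  have /eqP := addm h e1 e2.
  by rewrite eqn_modDr => /eqP.
- apply: half_cancel => //.
  have e1 : 2 * (n - i) + (2 * i + 2 * i') = 2 * n + 2 * i' by lia.
  have e2 : 2 * (n - i') + (2 * i + 2 * i') = 2 * n + 2 * i by lia.
  have /eqP := addm h e1 e2.
  by rewrite eqn_modDl => /eqP.
- have e1 : n - i + (i + i') = n + i' by lia.
  have e2 : n - i' + (i + i') = n + i by lia.
  have /eqP := addm h e1 e2.
  by rewrite eqn_modDl => /eqP.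
- have e1 : i + n - 1 + 0 = i + (n - 1) by lia.
  have e2 : i' + n - 1 + 0 = i' + (n - 1) by lia.
  have /eqP := addm h e1 e2.
  by rewrite eqn_modDr => /eqP.
Qed.

Lemma code_inj d d' s s' : d < 3 -> d' < 3 -> code d s = code d' s' -> d = d' /\ s = s'.
Proof. by case: d => [|[|[|?]]] //; case: d' => [|[|[|?]]] //; case: s; case: s'. Qed.

Lemma raw_inj n i i' d d' s s' : odd n -> i < n -> i' < n -> d < 3 -> d' < 3 ->
  raw n i d s %% (8 * n) = raw n i' d' s' %% (8 * n) -> [/\ i = i', d = d' & s = s'].
Proof.
move=> hn hi hi' hd hd' h.
have h8 : 8 %| 8 * n by apply: dvdn_mulr.
have := congr1 (modn^~ 8) h; rewrite /= !(modn_dvdm _ h8) !raw_mod8.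
move=> /(code_inj hd hd') [ed es]; subst d' s'.
split=> //; apply: (kp_inj (n := n) (d := d) (s := s)) => //.
move/eqP: h; rewrite /raw eqn_modDl -!muln_modr eqn_pmul2l //.
by move/eqP.
Qed.

Lemma raw_mod4 n i d s : raw n i d s %% 4 != 0.
Proof.
rewrite -(modn_dvdm _ (isT : 4 %| 8)) raw_mod8.
by case: d => [|[|?]]; case: s.
Qed.

Lemma cardP_sum (T : finType) (P : pred T) : #|[set x | P x]| = \sum_(x : T) (P x : nat).
Proof.
rewrite -sum1_card big_mkcond /=; apply: eq_bigr => x _.
by rewrite inE; case: (P x).
Qed.

Lemma sum_cut (R : nmodType) n (F : nat -> R) : 3 <= n ->
  (\sum_(j < n) (if ((j : nat) < 3)%N then F j else 0) = F 0 + F 1 + F 2)%R.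
Proof.
move=> h.
rewrite -(big_mkord xpredT (fun j => if j < 3 then F j else 0%R)).
rewrite (@big_cat_nat _ _ _ 3) //=.
have -> : (\sum_(3 <= i < n) (if (i < 3)%N then F i else 0) = 0)%R.
  rewrite big_nat_cond big1 // => j /andP[/andP[hj _] _]; by rewrite ltnNge hj.
by rewrite big_ltn // big_ltn // big_ltn // big_geq // !addr0 addrA.
Qed.

Lemma sum_eq1 d y : y < d -> \sum_(i < d) ((i : nat) == y : nat) = 1.
Proof.
move=> hy; rewrite (bigD1 (Ordinal hy)) //= eqxx big1 ?addn0 // => i hi.
suff -> : ((i : nat) == y) = false by [].
apply/negbTE; apply: contra hi => /eqP h; apply/eqP; exact: val_inj.
Qed.

Lemma count_mod N d m y : N = m * d -> y < d -> #|[set z : 'I_N | z %% d == y]| = m.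
Proof.
move=> -> hy; rewrite cardP_sum.
rewrite -(big_mkord xpredT (fun z => (z %% d == y : nat))).
elim: m => [|m IH]; first by rewrite mul0n big_geq.
rewrite mulSn addnC (@big_cat_nat _ _ _ (m * d)) ?leq_addr // IH /=.
rewrite -{1}(add0n (m * d)) big_addn addKn.
rewrite big_mkord (eq_bigr (fun i : 'I_d => ((i : nat) == y : nat))); last first.
  by move=> i _; rewrite addnC modnMDl modn_small.
rewrite sum_eq1 //; lia.
Qed.

Lemma natZp0 v a : 1 < v -> v %| a -> (a%:R : 'Z_v)%R = 0%R.
Proof. by move=> hv /eqP h; apply: val_inj; rewrite /= val_Zp_nat. Qed.

Lemma sum_cut_nat n (F : nat -> nat) : 3 <= n ->
  \sum_(j < n) (if (j : nat) < 3 then F j else 0) = F 0 + F 1 + F 2.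
Proof.
move=> h.
rewrite -(big_mkord xpredT (fun j => if j < 3 then F j else 0)).
rewrite (@big_cat_nat _ _ _ 3) //=.
have -> : \sum_(3 <= i < n) (if i < 3 then F i else 0) = 0.
  rewrite big_nat_cond big1 // => j /andP[/andP[hj _] _]; by rewrite ltnNge hj.
by rewrite big_ltn // big_ltn // big_ltn // big_geq // !addn0 addnA.
Qed.

Definition rotA n (H : 0 < n) (i : nat) (d : 'I_n) : 'I_n := Ordinal (ltn_pmod (i + d) H).
Definition rotcA n (H : 0 < n) (j : nat) (d : 'I_n) : 'I_n := Ordinal (subm_lt j d H).

Lemma rotA_inj n (H : 0 < n) (i : 'I_n) : injective (rotA H i).
Proof.
move=> d d' /(congr1 (fun x : 'I_n => subm n x i)) /=.
by rewrite !subm_rot // => /val_inj.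
Qed.

Lemma rotcA_inj n (H : 0 < n) (j : 'I_n) : injective (rotcA H j).
Proof.
move=> d d' /(congr1 (fun x : 'I_n => subm n j x)) /=.
by rewrite !subm_subm // => /val_inj.
Qed.

Arguments rotA_inj : clear implicits.
Arguments rotcA_inj : clear implicits.

Definition Aarr n v (i j : 'I_n) : option 'Z_v :=
  if subm n j i < 3 then Some ((raw n i (subm n j i) false)%:R)%R else None.

Lemma Arot n v (H : 0 < n) (i d : 'I_n) :
  Aarr v i (rotA H i d) = if (d : nat) < 3 then Some ((raw n i d false)%:R)%R else None.
Proof. by rewrite /Aarr /= subm_rot. Qed.

Lemma Acol n v (H : 0 < n) (j d : 'I_n) :
  Aarr v (rotcA H j d) j = if (d : nat) < 3 then Some ((raw n (subm n j d) d false)%:R)%R else None.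
Proof. by rewrite /Aarr /= subm_subm. Qed.

Lemma rows_card n v (hn : 3 <= n) (i : 'I_n) :
  #|[set j : 'I_n | Aarr v i j != None]| = 3.
Proof.
have H : 0 < n by lia.
have hinj : injective (rotA H i) := rotA_inj n H i.
rewrite cardP_sum (reindex_inj hinj) /=.
rewrite (eq_bigr (fun d : 'I_n => if (d : nat) < 3 then 1 else 0)); last first.
  by move=> d _; rewrite Arot; case: ifP.
by rewrite (sum_cut_nat (fun _ => 1)).
Qed.

Lemma cols_card n v (hn : 3 <= n) (j : 'I_n) :
  #|[set i : 'I_n | Aarr v i j != None]| = 3.
Proof.
have H : 0 < n by lia.
have hinj : injective (rotcA H j) := rotcA_inj n H j.
rewrite cardP_sum (reindex_inj hinj) /=.
rewrite (eq_bigr (fun d : 'I_n => if (d : nat) < 3 then 1 else 0)); last first.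
  by move=> d _; rewrite Acol; case: ifP.
by rewrite (sum_cut_nat (fun _ => 1)).
Qed.

Lemma row_sum n v (hv : 1 < v) (hvN : v %| 8 * n) (hn : 3 <= n) (i : 'I_n) :
  (\sum_(j < n) odflt 0 (Aarr v i j) = 0)%R.
Proof.
have H : 0 < n by lia.
have hinj : injective (rotA H i) := rotA_inj n H i.
rewrite (reindex_inj hinj) /=.
rewrite (eq_bigr (fun d : 'I_n => if ((d : nat) < 3)%N then ((raw n i d false)%:R : 'Z_v) else 0)%R); last first.
  by move=> d _; rewrite Arot; case: ifP.
rewrite (sum_cut (fun d => ((raw n i d false)%:R : 'Z_v)%R)) //.
by rewrite -!natrD natZp0 // (dvdn_trans hvN) // raw_row.
Qed.

Lemma col_sum n v (hv : 1 < v) (hvN : v %| 8 * n) (hn : 3 <= n) (j : 'I_n) :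
  (\sum_(i < n) odflt 0 (Aarr v i j) = 0)%R.
Proof.
have H : 0 < n by lia.
have hinj : injective (rotcA H j) := rotcA_inj n H j.
rewrite (reindex_inj hinj) /=.
rewrite (eq_bigr (fun d : 'I_n => if ((d : nat) < 3)%N then ((raw n (subm n j d) d false)%:R : 'Z_v) else 0)%R); last first.
  by move=> d _; rewrite Acol; case: ifP.
rewrite (sum_cut (fun d => ((raw n (subm n j d) d false)%:R : 'Z_v)%R)) //.
by rewrite -!natrD natZp0 // (dvdn_trans hvN) // raw_col.
Qed.

Lemma cnt n v (hn : 3 <= n) (w : 'Z_v) :
  #|[set p : 'I_n * 'I_n | Aarr v p.1 p.2 == Some w]| =
  \sum_(i < n) ((((raw n i 0 false)%:R == w)%R : nat) + (((raw n i 1 false)%:R == w)%R : nat)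
                 + (((raw n i 2 false)%:R == w)%R : nat)).
Proof.
have H : 0 < n by lia.
rewrite cardP_sum -(pair_bigA _ (fun i j => (Aarr v i j == Some w : nat))) /=.
apply: eq_bigr => i _.
have hinj : injective (rotA H i) := rotA_inj n H i.
rewrite (reindex_inj hinj) /=.
rewrite (eq_bigr (fun d : 'I_n => if (d : nat) < 3 then (((raw n i d false)%:R == w)%R : nat) else 0)); last first.
  by move=> d _; rewrite Arot; case: ifP.
by rewrite (sum_cut_nat (fun d => (((raw n i d false)%:R == w)%R : nat))).
Qed.

Lemma negeq n v (hv : 1 < v) (hvN : v %| 8 * n) i d (y : 'Z_v) : i < n -> d < 3 ->
  ((raw n i d false)%:R == - y)%R = ((raw n i d true)%:R == y)%R.
Proof.
move=> hi hd.
have h0 : ((raw n i d false)%:R + (raw n i d true)%:R = 0 :> 'Z_v)%R.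
  by rewrite -natrD natZp0 // (dvdn_trans hvN) // raw_pair.
have -> : ((raw n i d true)%:R = - (raw n i d false)%:R :> 'Z_v)%R.
  by apply/eqP; rewrite -addr_eq0 addrC h0.
by rewrite eqr_oppLR.
Qed.

Definition G n (q : 'I_n * ('I_3 * bool)) := raw n q.1 q.2.1 q.2.2.
Definition hq n (H : 0 < 8 * n) (q : 'I_n * ('I_3 * bool)) : 'I_(8 * n) :=
  Ordinal (ltn_pmod (G q) H).

Lemma hq_inj n (H : 0 < 8 * n) : odd n -> injective (hq H).
Proof.
move=> hn [i [d s]] [i' [d' s']] /(congr1 val) /= h.
have [e1 e2 e3] := raw_inj hn (ltn_ord i) (ltn_ord i') (ltn_ord d) (ltn_ord d') h.
by move: e1 e2 e3 => /= /val_inj -> /val_inj -> ->.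
Qed.

Lemma hq_img n (H : 0 < 8 * n) : odd n ->
  hq H @: setT = [set z : 'I_(8 * n) | z %% 4 != 0].
Proof.
move=> hn; apply/eqP; rewrite eqEcard; apply/andP; split.
  apply/subsetP => z /imsetP [q _ ->]; rewrite inE /=.
  by rewrite (modn_dvdm _ (dvdn_mulr n (isT : 4 %| 8))) raw_mod4.
rewrite card_imset; last exact: hq_inj.
rewrite cardsT card_prod card_prod !card_ord card_bool.
have := cardsC [set z : 'I_(8 * n) | z %% 4 == 0].
rewrite card_ord (@count_mod _ 4 (2 * n) 0) //; last by lia.
have -> : ~: [set z : 'I_(8 * n) | z %% 4 == 0] = [set z : 'I_(8 * n) | z %% 4 != 0].
  by apply/setP => z; rewrite !inE.
lia.
Qed.

Lemma sum_Q n (F : nat -> nat -> bool -> nat) :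
  \sum_(q : 'I_n * ('I_3 * bool)) F q.1 q.2.1 q.2.2 =
  \sum_(i < n) (F i 0 true + F i 0 false + (F i 1 true + F i 1 false) + (F i 2 true + F i 2 false)).
Proof.
rewrite -(pair_bigA _ (fun (i : 'I_n) (ds : 'I_3 * bool) => F i ds.1 ds.2)) /=.
apply: eq_bigr => i _.
rewrite -(pair_bigA _ (fun (d : 'I_3) (s : bool) => F i d s)) /=.
rewrite !big_ord_recl big_ord0 !big_bool /=.
by rewrite addn0 addnA.
Qed.

Lemma heff n lam t v : odd n -> 3 <= n -> 0 < lam -> 2 * n = lam * t -> v = 4 * t ->
  exists A : 'I_n -> 'I_n -> option 'Z_v, @is_heffter lam t n n 3 3 v A.
Proof.
move=> hodd hn hlam ht hv.
have ht0 : 0 < t by case: t ht {hv} => [|t]; [rewrite muln0; lia | ].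
have hv1 : 1 < v by lia.
have hN : 8 * n = lam * v by rewrite hv; nia.
have hvN : v %| 8 * n by rewrite hN dvdn_mull.
have h4v : 4 %| v by rewrite hv dvdn_mulr.
have hv4 : v %/ t = 4 by rewrite hv mulnK.
have N0 : 0 < 8 * n by lia.
exists (Aarr v).
split; first by move=> i; exact: rows_card.
split; first by move=> j; exact: cols_card.
split; last by split; [move=> i; exact: row_sum | move=> j; exact: col_sum].
move=> y.
rewrite !cnt // -big_split /=.
rewrite (eq_bigr (fun i : 'I_n =>
   let F := fun (d : nat) (s : bool) => (((raw n i d s)%:R == y)%R : nat) in
   F 0 true + F 0 false + (F 1 true + F 1 false) + (F 2 true + F 2 false))); last first.
  move=> i _ /=; rewrite !(@negeq n v hv1 hvN) //; lia.
rewrite -(@sum_Q n (fun i d s => (((raw n i d s)%:R == y)%R : nat))).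
have E : forall q, (((G q)%:R == y)%R) = ((hq N0 q : nat) %% v == y).
  by move=> q; rewrite -val_eqE /= val_Zp_nat // modn_dvdm.
rewrite (eq_bigr (fun q => ((hq N0 q : nat) %% v == y : nat))); last by move=> q _; rewrite -E.
rewrite -(cardP_sum (fun q => (hq N0 q : nat) %% v == y)).
rewrite -(card_imset _ (@hq_inj n N0 hodd)).
have -> : hq N0 @: [set q | (hq N0 q : nat) %% v == y] =
          [set z : 'I_(8 * n) | (z %% 4 != 0) && (z %% v == y)].
  apply/setP => z; rewrite inE; apply/imsetP/andP.
    case=> q; rewrite inE => hP ->; split => //.
    have : hq N0 q \in hq N0 @: setT by apply: imset_f.
    by rewrite hq_img // inE.
  case=> h4 hP.
  have : z \in hq N0 @: setT by rewrite hq_img // inE.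
  by case/imsetP => q _ ez; exists q => //; rewrite inE -ez.
rewrite /subJ inE hv4.
have hy : (y : nat) < v by rewrite -[X in _ < X](Zp_cast hv1) ltn_ord.
case: ifP => h4y.
  rewrite (_ : [set _ | _] = set0) ?cards0 //; apply/setP => z; rewrite !inE.
  apply/negP => /andP [hz /eqP e].
  move: hz; rewrite -(modn_dvdm z h4v) e.
  by rewrite /dvdn in h4y; rewrite h4y.
rewrite (_ : [set _ | _] = [set z : 'I_(8 * n) | z %% v == y]).
  exact: count_mod.
apply/setP => z; rewrite !inE; apply: andb_idl => /eqP e.
rewrite -(modn_dvdm z h4v) e.
by rewrite /dvdn in h4y; rewrite h4y.
Qed.

Theorem proposition4 (n lam : nat) :
  odd n -> (3 <= n)%N -> (0 < lam)%N -> (lam %| 2 * n)%N ->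
  exists_heffter_sq lam ((2 * n) %/ lam) n 3.
Proof.
move=> hodd hn hlam hd.
set t := (2 * n) %/ lam.
have ht : 2 * n = lam * t by rewrite /t [RHS]mulnC divnK.
have ht0 : 0 < t by case: (t) ht => [|t']; [rewrite muln0; lia | ].
have e3 : (2 * n * 3) %/ lam = 3 * t by rewrite ht -mulnA mulKn // mulnC.
rewrite /exists_heffter_sq /exists_heffter.
do 6 (split; first by lia).
split; first by rewrite dvdn_mulr.
split; first by rewrite e3 dvdn_mull.
apply: heff => //.
by rewrite e3; lia.
Qed.
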